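(* Let $m\ge2$ be an integer and let $A$ be a left brace with $A^{(3)}=A^{m+1}=\{0\}$. Let $a\in A$, and define $a_1=a$ and $a_{j+1}=a*a_j$ for $j\ge1$ (so $a_j=0$ for $j>m$). Then for every integer $n$ (possibly negative or zero) and every $1\le j\le m$, \[(na)*a_j=\sum_{k=1}^{m-j}\binom{n}{k}a_{k+j}.\]
   Context: A left brace $(A,+,\cdot)$ is a set $A$ with two binary operations such that $(A,+)$ is an abelian group, $(A,\cdot)$ is a group, and $a(b+c)=ab-a+ac$ for all $a,b,c\in A$. In a left brace, $a*b=-a+ab-b$. For subsets $L,M\subseteq A$, $L*M$ is the subgroup of $(A,+)$ generated by $\{l*m\mid l\in L,m\in M\}$. Set $A^{(1)}=A$, $A^{(r+1)}=A^{(r)}*A$, and $A^1=A$, $A^{r+1}=A*A^r$ for $r\ge1$. Here $na$ is the $n$-fold multiple of $a$ in $(A,+)$. Generalised binomial coefficients: for $n\in\mathbb{Z}$ and integer $k\ge0$, $\binom{n}{0}=1$ and $\binom{n}{k}=\frac{n(n-1)\cdots(n-k+1)}{k!}$ for $k>0$. *)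

(* Defs.v *)
From HB Require Import structures.
From mathcomp Require Import all_boot all_order all_algebra.
Set Implicit Arguments. Unset Strict Implicit. Unset Printing Implicit Defensive.
Import Order.TTheory GRing.Theory Num.Theory.
Local Open Scope ring_scope.

Definition is_left_brace (A : zmodType) (mul : A -> A -> A) : Prop :=
  [/\ (forall x y z, mul x (mul y z) = mul (mul x y) z),
      (exists e : A, (forall x, mul e x = x /\ mul x e = x) /\
                     (forall x, exists y, mul x y = e /\ mul y x = e)) &
      (forall a b c, mul a (b + c) = mul a b - a + mul a c)].

Definition bstar (A : zmodType) (mul : A -> A -> A) (a b : A) : A :=
  - a + mul a b - b.

Inductive addgen (A : zmodType) (S : A -> Prop) : A -> Prop :=
  | addgen0 : addgen S 0
  | addgen_in x : S x -> addgen S x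
  | addgen_sub x y : addgen S x -> addgen S y -> addgen S (x - y).

Definition bstar_set (A : zmodType) (mul : A -> A -> A) (L M : A -> Prop) : A -> Prop :=
  addgen (fun x => exists l m, L l /\ M m /\ x = bstar mul l m).

(* A^(r) : A^(1) = A, A^(r+1) = A^(r) * A  (index r.+1 stands for A^(r+1)) *)
Fixpoint right_series (A : zmodType) (mul : A -> A -> A) (r : nat) : A -> Prop :=
  match r with
  | 0 | 1 => fun _ => True
  | r'.+1 => bstar_set mul (right_series mul r') (fun _ => True)
  end.

(* A^r : A^1 = A, A^(r+1) = A * A^r *)
Fixpoint left_series (A : zmodType) (mul : A -> A -> A) (r : nat) : A -> Prop :=
  match r with
  | 0 | 1 => fun _ => True
  | r'.+1 => bstar_set mul (fun _ => True) (left_series mul r')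
  end.

(* a_j for j >= 1: a_1 = a, a_(j+1) = a * a_j *)
Definition aseq (A : zmodType) (mul : A -> A -> A) (a : A) (j : nat) : A :=
  iter j.-1 (bstar mul a) a.

(* generalised binomial coefficient n(n-1)...(n-k+1)/k! for n : int
   (the division is exact) *)
Definition binz (n : int) (k : nat) : int :=
  ((\prod_(i < k) (n - i%:Z)) %/ (k`!)%:Z)%Z.

(* Main.v *)
Require Import Defs.
From HB Require Import structures.
From mathcomp Require Import all_boot all_order all_algebra.
Import Order.TTheory GRing.Theory Num.Theory.
Local Open Scope ring_scope.
From mathcomp Require Import ring lra zify.

Lemma int_ind2 (P : int -> Prop) :
  P 0 -> (forall n, P n <-> P (n + 1)) -> forall n, P n.
Proof.
move=> P0 HS n; case: n => p.
  elim: p => [//|p IH]; have := (HS p%:Z).1 IH.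
  by rewrite -addn1 PoszD.
elim: p => [|p IH]; first by apply/(HS (Negz 0)).
apply/(HS (Negz p.+1)).
suff -> : Negz p.+1 + 1 = Negz p by [].
by rewrite !NegzE; lia.
Qed.

Definition Pz (n : int) (k : nat) : int := \prod_(i < k) (n - i%:Z).

Lemma Pz_S (n : int) k : Pz (n + 1) k.+1 = Pz n k.+1 + k.+1%:Z * Pz n k.
Proof.
rewrite /Pz big_ord_recl big_ord_recr /=.
have -> : \prod_(i < k) (n + 1 - (bump 0 i)%:Z) = \prod_(i < k) (n - i%:Z).
  by apply: eq_bigr => i _; rewrite /bump /= add1n -addn1 PoszD; ring.
ring.
Qed.

Lemma Pz0 k : Pz 0 k.+1 = 0.
Proof. by rewrite /Pz big_ord_recl /= subrr mul0r. Qed.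

Lemma Pz_dvd k n : exists q, Pz n k = q * k`!%:Z.
Proof.
elim: k n => [|k IH] n; first by exists 1; rewrite /Pz big_ord0 fact0.
move: n; apply: int_ind2; first by exists 0; rewrite Pz0 mul0r.
move=> n; rewrite Pz_S; have [r Er] := IH n; rewrite Er factS PoszM.
split => -[q Eq].
  by exists (q + r); rewrite Eq; ring.
exists (q - r); apply: (addIr (k.+1%:Z * (r * k`!%:Z))); rewrite Eq; ring.
Qed.

Lemma binz0 n : binz n 0 = 1.
Proof. by rewrite /binz big_ord0 fact0 divz1. Qed.

Lemma binz0n k : binz 0 k.+1 = 0.
Proof. by rewrite /binz -/(Pz 0 k.+1) Pz0 div0z. Qed.

Lemma binzS n k : binz (n + 1) k.+1 = binz n k.+1 + binz n k.
Proof.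
rewrite /binz -!/(Pz _ _) Pz_S.
have [q1 ->] := Pz_dvd k.+1 n.
have [q0 E0] := Pz_dvd k n.
rewrite E0.
have f0 : (k`!%:Z != 0) by rewrite eqz_nat -lt0n fact_gt0.
have f1 : ((k.+1)`!%:Z != 0) by rewrite eqz_nat -lt0n fact_gt0.
have -> : q1 * (k.+1)`!%:Z + k.+1%:Z * (q0 * k`!%:Z) = (q1 + q0) * (k.+1)`!%:Z.
  rewrite factS PoszM; ring.
by rewrite !mulzK.
Qed.

Section Brace.
Variables (A : zmodType) (mul : A -> A -> A).
Hypothesis hA : is_left_brace mul.
Local Notation st := (bstar mul).
Definition lam a b := mul a b - a.

Lemma lamD a b c : lam a (b + c) = lam a b + lam a c.
Proof. by case: hA => _ _ D; rewrite /lam D addrA. Qed.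

Lemma lam0 a : lam a 0 = 0.
Proof.
have := lamD a 0 0; rewrite addr0 => /eqP; rewrite -subr_eq0.
by rewrite opprD addrA subrr sub0r oppr_eq0 => /eqP.
Qed.

Lemma lamN a b : lam a (- b) = - lam a b.
Proof. by apply/eqP; rewrite -subr_eq0 opprK -lamD addNr lam0. Qed.

Lemma e0 : (forall x, mul 0 x = x /\ mul x 0 = x) /\
   (forall x, exists y, mul x y = 0 /\ mul y x = 0).
Proof.
case: hA => _ [e [He Hi]] _.
have ee : e = 0.
  have := lam0 e; rewrite /lam (He 0).1 sub0r => /eqP; rewrite oppr_eq0 => /eqP //.
by subst e.
Qed.

Lemma lamM a b c : lam (mul a b) c = lam a (lam b c).
Proof.
case: hA => As _ _.
by rewrite {3}/lam lamD lamN /lam As opprB addrA subrK.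
Qed.

Lemma lam0l x : lam 0 x = x.
Proof. by rewrite /lam (e0.1 x).1 subr0. Qed.

Lemma lam_inj a x y : lam a x = lam a y -> x = y.
Proof.
have [b [_ Hb]] := e0.2 a.
by move=> E; rewrite -(lam0l x) -(lam0l y) -Hb !lamM E.
Qed.

Lemma lam_surj a y : exists x, lam a x = y.
Proof.
have [b [Hb _]] := e0.2 a.
by exists (lam b y); rewrite -lamM Hb lam0l.
Qed.

Lemma stE a b : st a b = lam a b - b.
Proof. by rewrite /bstar /lam [- a + _]addrC. Qed.

Lemma lamE a b : lam a b = b + st a b.
Proof. by rewrite stE addrC subrK. Qed.

Lemma stD a b c : st a (b + c) = st a b + st a c.
Proof. by rewrite !stE lamD opprD addrACA. Qed.

Lemma st0 a : st a 0 = 0.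
Proof. by rewrite stE lam0 subr0. Qed.

Lemma stN a b : st a (- b) = - st a b.
Proof. by rewrite !stE lamN opprK opprB addrC. Qed.

Lemma st0l b : st 0 b = 0.
Proof. by rewrite stE lam0l subrr. Qed.

Lemma st_mul a b c : st (mul a b) c = st a (st b c) + st a c + st b c.
Proof.
rewrite stE lamM [lam b c]lamE lamD !lamE.
rewrite addrC addrA addKr.
by rewrite [RHS]addrAC [st a (st b c) + st b c]addrC addrC.
Qed.

Hypothesis h3 : forall x, right_series mul 3 x -> x = 0.

Lemma st_A2 w c : right_series mul 2 w -> st w c = 0.
Proof. by move=> Hw; apply: h3; apply: addgen_in; exists w, c. Qed.

Lemma A2_st x y : right_series mul 2 (st x y).
Proof. by apply: addgen_in; exists x, y. Qed.

Lemma mulE x y : mul x y = x + lam x y.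
Proof. by rewrite /lam addrC subrK. Qed.

Lemma stA2r z w c : right_series mul 2 w -> st (z + w) c = st z c.
Proof.
move=> Hw; have [u Hu] := lam_surj z w.
have Hu2 : right_series mul 2 u.
  have -> : u = w - st z u by rewrite -Hu lamE addrK.
  by apply: addgen_sub => //; apply: A2_st.
by rewrite -Hu -mulE st_mul (st_A2 u c Hu2) st0 add0r addr0.
Qed.

Lemma stDl x y c : st (x + y) c = st x c + st y c + st x (st y c).
Proof.
have [y' Hy] := lam_surj x y.
have E : st y c = st y' c by rewrite -Hy lamE (stA2r _ _ _ (A2_st x y')).
rewrite E -Hy -mulE st_mul.
by rewrite [st x (st y' c) + _]addrC addrAC.
Qed.
End Brace.

Section Main.
Variables (A : zmodType) (mul : A -> A -> A).
Hypothesis hA : is_left_brace mul.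
Hypothesis h3 : forall x, right_series mul 3 x -> x = 0.
Local Notation st := (bstar mul).

Lemma stMz a x z : st a (x *~ z) = st a x *~ z.
Proof.
move: z; apply: int_ind2; first by rewrite !mulr0z st0.
by move=> n; rewrite !mulrzDr !mulr1z stD //; split => [->|/addIr].
Qed.

Lemma st_sum a (N : nat) (F : nat -> A) :
  st a (\sum_(k < N) F k) = \sum_(k < N) st a (F k).
Proof. by apply: big_morph; [exact: stD | exact: st0]. Qed.

Lemma aseqS a k : (1 <= k)%N -> aseq mul a k.+1 = st a (aseq mul a k).
Proof. by case: k. Qed.

Lemma aseq_ls a k : left_series mul k.+1 (aseq mul a k.+1).
Proof.
elim: k => [//|k IH].
by apply: addgen_in; exists a, (aseq mul a k.+1).
Qed.

Variables (m j : nat) (a : A).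
Hypothesis hm1 : forall x, left_series mul m.+1 x -> x = 0.
Hypothesis hj1 : (1 <= j)%N.
Hypothesis hjm : (j <= m)%N.

Lemma aseq_m : aseq mul a m.+1 = 0.
Proof. exact: hm1 (aseq_ls a m). Qed.

Definition Ssum (n : int) :=
  \sum_(k < m - j) aseq mul a (k.+1 + j) *~ binz n k.+1.

Lemma SS n : Ssum (n + 1) = aseq mul a j.+1 + (Ssum n + st a (Ssum n)).
Proof.
have -> : Ssum (n + 1) = Ssum n +
    \sum_(k < m - j) aseq mul a (k.+1 + j) *~ binz n k.
  by rewrite /Ssum -big_split /=; apply: eq_bigr => k _; rewrite binzS mulrzDr.
rewrite addrCA; congr (_ + _).
rewrite /Ssum (big_morph (st a) (@stD _ _ hA a) (@st0 _ _ hA a)).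
have E : forall k : nat, st a (aseq mul a (k.+1 + j) *~ binz n k.+1)
        = aseq mul a (k.+2 + j) *~ binz n k.+1.
  by move=> k; rewrite stMz -aseqS.
under [in RHS]eq_bigr => k _ do rewrite E.
have : (m - j + j = m)%N by rewrite subnK.
case: (m - j)%N => [|N] HN.
  by rewrite add0n in HN; rewrite !big_ord0 HN aseq_m addr0.
rewrite big_ord_recl big_ord_recr /= binz0 mulr1z add1n.
have -> : (N.+2 + j = m.+1)%N by rewrite -HN.
by rewrite aseq_m mul0rz addr0; congr (_ + _).
Qed.

Lemma main_pos (n : int) : st (a *~ n) (aseq mul a j) = Ssum n.
Proof.
move: n; apply: int_ind2.
  rewrite mulr0z st0l // /Ssum big1 // => k _.
  by rewrite binz0n mulr0z.
move=> n; rewrite SS mulrzDr mulr1z addrC stDl // -aseqS //.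
rewrite -addrA; split => [->//|/(addrI (aseq mul a j.+1))].
by rewrite -!lamE => /(@lam_inj _ _ hA a).
Qed.
End Main.

Theorem mainTheorem11 (A : zmodType) (mul : A -> A -> A) (m : nat)
  (hm : (2 <= m)%N) (hA : is_left_brace mul)
  (h3 : forall x, right_series mul 3 x -> x = 0)
  (hm1 : forall x, left_series mul m.+1 x -> x = 0)
  (a : A) (n : int) (j : nat) (hj1 : (1 <= j)%N) (hjm : (j <= m)%N) :
  bstar mul (a *~ n) (aseq mul a j)
  = \sum_(1 <= k < (m - j).+1) (aseq mul a (k + j)) *~ binz n k.
Proof.
rewrite big_add1 /= big_mkord.
exact: main_pos.
Qed.
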